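(* Let $n\ge 2$, let $p, p', s \in B_{n}$ be braids satisfying $p' = s*p$ in $B_{n+1}$, and let $s'\in B_{n+1}$. Then $$p'\, \delta_{n+1}^{-1} = s' \cdot d(p)\, \sigma_1\, \delta_{n+1}^{-1} \cdot s'^{-1} \ \text{ in } B_{n+1} \iff s'^{-1} s\in C_{B_{n+1}}\big(d(p)\, \sigma_1\, \delta_{n+1}^{-1}\big),$$ where $C_{B_{n+1}}(x)$ denotes the centralizer of $x$ in $B_{n+1}$.
   Context: $B_m$ denotes the braid group on $m$ strands with Artin generators $\sigma_1,\dots,\sigma_{m-1}$ and relations $\sigma_i\sigma_j\sigma_i=\sigma_j\sigma_i\sigma_j$ for $|i-j|=1$, $\sigma_i\sigma_j=\sigma_j\sigma_i$ for $|i-j|>1$; $B_\infty$ is the braid group on generators $\sigma_1,\sigma_2,\dots$ with the same relations, and $B_m\subset B_{m+1}\subset B_\infty$ via the generators. The shift $d$ is the monomorphism of $B_\infty$ induced by $\sigma_{i_1}^{\varepsilon_1}\cdots\sigma_{i_k}^{\varepsilon_k}\mapsto \sigma_{i_1+1}^{\varepsilon_1}\cdots\sigma_{i_k+1}^{\varepsilon_k}$. The shifted conjugacy operator is $a*b = a\cdot d(b)\cdot \sigma_1\cdot d(a^{-1})$ for $a,b\in B_\infty$. Also $\delta_{n+1} = \sigma_{n}\sigma_{n-1}\cdots\sigma_1 \in B_{n+1}$. *)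

(* Defs.v *)
(* braid groups given by their Artin presentation, as words
   in the generators modulo the congruence generated by the relations. *)
From Stdlib Require Import List Arith.
Import ListNotations.

(* A letter (i, true) is sigma_i, (i, false) is sigma_i^{-1}. *)
Definition letter : Type := (nat * bool)%type.
Definition word : Type := list letter.

Definition in_B (m : nat) (w : word) : Prop :=
  Forall (fun l : letter => 1 <= fst l /\ fst l < m) w.

Inductive brel (m : nat) : word -> word -> Prop :=
| br_cancel : forall i b, 1 <= i < m ->
    brel m [(i, b); (i, negb b)] []
| br_braid : forall i j, 1 <= i < m -> 1 <= j < m -> (i = S j \/ j = S i) ->
    brel m [(i, true); (j, true); (i, true)] [(j, true); (i, true); (j, true)]
| br_comm : forall i j, 1 <= i < m -> 1 <= j < m -> (S i < j \/ S j < i) ->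
    brel m [(i, true); (j, true)] [(j, true); (i, true)].

Inductive beq (m : nat) : word -> word -> Prop :=
| beq_step : forall u v x y, brel m x y -> beq m (u ++ x ++ v) (u ++ y ++ v)
| beq_refl : forall w, beq m w w
| beq_sym : forall w1 w2, beq m w1 w2 -> beq m w2 w1
| beq_trans : forall w1 w2 w3, beq m w1 w2 -> beq m w2 w3 -> beq m w1 w3.

Definition winv (w : word) : word :=
  rev (map (fun l : letter => (fst l, negb (snd l))) w).

Definition dshift (w : word) : word :=
  map (fun l : letter => (S (fst l), snd l)) w.

Definition sig (i : nat) : word := [(i, true)].

(* delta_word n = sigma_n sigma_{n-1} ... sigma_1 (= delta_{n+1}). *)
Fixpoint delta_word (n : nat) : word :=
  match n with
  | 0 => []
  | S k => (S k, true) :: delta_word k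
  end.

(* Shifted conjugacy a * b = a . d(b) . sigma_1 . d(a^{-1}). *)
Definition sconj (a b : word) : word :=
  a ++ dshift b ++ sig 1 ++ dshift (winv a).

Definition centralizes (m : nat) (g x : word) : Prop :=
  beq m (g ++ x) (x ++ g).

(* Main.v *)
Require Import Defs.
From Stdlib Require Import List Arith Lia.
Import ListNotations.

Lemma beq_cong m a b u v : beq m a b -> beq m (u ++ a ++ v) (u ++ b ++ v).
Proof.
  intro H; induction H.
  - replace (u ++ (u0 ++ x ++ v0) ++ v) with ((u ++ u0) ++ x ++ (v0 ++ v))
      by (rewrite <- !app_assoc; reflexivity).
    replace (u ++ (u0 ++ y ++ v0) ++ v) with ((u ++ u0) ++ y ++ (v0 ++ v))
      by (rewrite <- !app_assoc; reflexivity).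
    apply beq_step; assumption.
  - apply beq_refl.
  - apply beq_sym; assumption.
  - eapply beq_trans; eassumption.
Qed.

Lemma beq_app m a a' b b' : beq m a a' -> beq m b b' -> beq m (a ++ b) (a' ++ b').
Proof.
  intros H1 H2. eapply beq_trans.
  - pose proof (beq_cong m a a' [] b H1) as H. simpl in H. exact H.
  - pose proof (beq_cong m b b' a' [] H2) as H. rewrite !app_nil_r in H. exact H.
Qed.

Lemma beq_pre m a b u : beq m a b -> beq m (u ++ a) (u ++ b).
Proof. intro H. pose proof (beq_cong m a b u [] H) as H'. rewrite !app_nil_r in H'. exact H'. Qed.

Lemma winv_app a b : winv (a ++ b) = winv b ++ winv a.
Proof. unfold winv. rewrite map_app, rev_app_distr. reflexivity. Qed.

Lemma winv_inv w : winv (winv w) = w.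
Proof.
  unfold winv. rewrite map_rev, rev_involutive, map_map.
  induction w as [|[i b] w IH]; simpl; [reflexivity|]. rewrite Bool.negb_involutive. simpl in IH. rewrite IH. reflexivity.
Qed.

Lemma in_B_winv m w : in_B m w -> in_B m (winv w).
Proof.
  unfold in_B, winv. intro H. rewrite Forall_forall in *. intros x Hx.
  apply in_rev in Hx. apply in_map_iff in Hx. destruct Hx as [y [<- Hy]]. simpl. apply H; auto.
Qed.

Lemma cancel_r m w : in_B m w -> beq m (w ++ winv w) [].
Proof.
  induction w as [|[i b] w IH]; intro H; simpl.
  - apply beq_refl.
  - inversion H; subst. simpl in H2.
    change (winv ((i,b)::w)) with (winv w ++ [(i, negb b)]).
    eapply beq_trans.
    + rewrite app_assoc. apply (beq_cong m (w ++ winv w) [] [(i,b)] [(i, negb b)]). apply IH; assumption.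
    + simpl. pose proof (beq_step m [] [] _ _ (br_cancel m i b H2)) as Hs.
      simpl in Hs. exact Hs.
Qed.

Lemma cancel_l m w : in_B m w -> beq m (winv w ++ w) [].
Proof.
  intro H. pose proof (cancel_r m (winv w) (in_B_winv m w H)) as H'.
  rewrite winv_inv in H'. exact H'.
Qed.

Lemma cancel_mid_r m w u v : in_B m w -> beq m (u ++ w ++ winv w ++ v) (u ++ v).
Proof.
  intro H. pose proof (beq_cong m _ _ u v (cancel_r m w H)) as H'.
  rewrite <- app_assoc in H'. exact H'.
Qed.

Lemma cancel_mid_l m w u v : in_B m w -> beq m (u ++ winv w ++ w ++ v) (u ++ v).
Proof.
  intro H. pose proof (beq_cong m _ _ u v (cancel_l m w H)) as H'.
  rewrite <- app_assoc in H'. exact H'.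
Qed.

Lemma delta_comm m j c : S j < c -> c < m ->
  beq m (delta_word j ++ [(c,true)]) ((c,true) :: delta_word j).
Proof.
  induction j; intros H1 H2; simpl.
  - apply beq_refl.
  - eapply beq_trans.
    + apply (beq_pre m (delta_word j ++ [(c,true)]) ((c,true)::delta_word j) [(S j, true)]). apply IHj; lia.
    + simpl.
      pose proof (beq_step m [] (delta_word j) _ _ (br_comm m (S j) c ltac:(lia) ltac:(lia) ltac:(lia))) as Hs.
      simpl in Hs. exact Hs.
Qed.

Lemma delta_pos m n i : 1 <= i < n -> n < m ->
  beq m (delta_word n ++ [(S i, true)]) ((i, true) :: delta_word n).
Proof.
  revert i. induction n as [|k IH]; intros i Hi Hm; [lia|].
  simpl. destruct (Nat.lt_ge_cases i k) as [Hlt|Hge].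
  - eapply beq_trans.
    + apply (beq_pre m (delta_word k ++ [(S i,true)]) ((i,true)::delta_word k) [(S k, true)]). apply IH; lia.
    + simpl.
      pose proof (beq_step m [] (delta_word k) _ _ (br_comm m i (S k) ltac:(lia) ltac:(lia) ltac:(lia))) as Hs.
      simpl in Hs. apply beq_sym. exact Hs.
  - assert (i = k) by lia. subst i. destruct k as [|j]; [lia|].
    simpl.
    eapply beq_trans.
    + apply (beq_pre m (delta_word j ++ [(S (S j),true)]) ((S (S j),true)::delta_word j) [(S (S j), true); (S j, true)]). apply delta_comm; lia.
    + simpl.
      pose proof (beq_step m [] (delta_word j) _ _ (br_braid m (S (S j)) (S j) ltac:(lia) ltac:(lia) ltac:(lia))) as Hs.
      simpl in Hs. exact Hs.
Qed.

Lemma delta_letter m n i b : 1 <= i < n -> n < m ->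
  beq m (delta_word n ++ [(S i, b)]) ((i, b) :: delta_word n).
Proof.
  intros Hi Hm. destruct b; [apply delta_pos; auto|].
  pose proof (delta_pos m n i Hi Hm) as H.
  (* sigma_i^-1 (delta sigma_{i+1}) sigma_{i+1}^-1 = sigma_i^-1 (sigma_i delta) sigma_{i+1}^-1 *)
  pose proof (beq_cong m _ _ [(i,false)] [(S i,false)] H) as H2.
  eapply beq_trans.
  - apply beq_sym.
    replace ((delta_word n ++ [(S i, false)])) with ([] ++ delta_word n ++ [(S i,false)]) by reflexivity.
    pose proof (cancel_mid_l m [(i,true)] [] (delta_word n ++ [(S i, false)]) ltac:(repeat constructor; simpl; lia)) as Hc.
    simpl in Hc. simpl. exact Hc.
  - eapply beq_trans; [apply beq_sym; exact H2|].
    pose proof (cancel_mid_r m [(S i,true)] ((i, false) :: delta_word n) [] ltac:(repeat constructor; simpl; lia)) as Hc.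
    rewrite <- !app_assoc in *. simpl in *. rewrite ?app_nil_r in Hc. exact Hc.
Qed.

Lemma delta_word_shift m n w : in_B n w -> n < m ->
  beq m (delta_word n ++ dshift w) (w ++ delta_word n).
Proof.
  intros H Hm. induction w as [|[i b] w IH].
  - simpl. rewrite app_nil_r. apply beq_refl.
  - inversion H; subst. simpl in H2.
    eapply beq_trans.
    + change (dshift ((i,b)::w)) with ([(S i, b)] ++ dshift w).
      rewrite app_assoc.
      apply (beq_cong m (delta_word n ++ [(S i, b)]) ((i, b) :: delta_word n) [] (dshift w)).
      apply delta_letter; auto.
    + simpl. apply (beq_pre m (delta_word n ++ dshift w) (w ++ delta_word n) [(i,b)]). apply IH; auto.
Qed.

Lemma in_B_delta m n : n < m -> in_B m (delta_word n).
Proof.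
  induction n; intros; simpl; constructor; simpl; try lia. apply IHn; lia.
Qed.

Theorem proposition2 (n : nat) (p p' s s' : word) :
  2 <= n ->
  in_B n p -> in_B n p' -> in_B n s ->
  beq (n + 1) p' (sconj s p) ->
  in_B (n + 1) s' ->
  (beq (n + 1) (p' ++ winv (delta_word n))
       (s' ++ (dshift p ++ sig 1 ++ winv (delta_word n)) ++ winv s')
   <->
   centralizes (n + 1) (winv s' ++ s) (dshift p ++ sig 1 ++ winv (delta_word n))).
Proof.
  intros Hn Hp Hp' Hs Hps Hs'.
  assert (HsB : in_B (n+1) s).
  { unfold in_B in *. eapply Forall_impl; [|exact Hs]. simpl; intros; lia. }
  assert (HdB : in_B (n+1) (delta_word n)) by (apply in_B_delta; lia).
  set (D := winv (delta_word n)) in *.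
  assert (Hsh : forall w, in_B n w -> beq (n+1) (dshift w ++ D) (D ++ w)).
  { intros w Hw. pose proof (delta_word_shift (n+1) n w Hw ltac:(lia)) as H.
    pose proof (beq_cong _ _ _ D D H) as H2.
    eapply beq_trans.
    - apply beq_sym. pose proof (cancel_mid_l (n+1) (delta_word n) [] (dshift w ++ D) HdB) as Hc.
      simpl in Hc. exact Hc.
    - eapply beq_trans.
      + rewrite <- ?app_assoc in H2. exact H2.
      + pose proof (cancel_mid_r (n+1) (delta_word n) (D ++ w) [] HdB) as Hc.
        rewrite ?app_nil_r, <- ?app_assoc in Hc. exact Hc. }
  set (X := dshift p ++ sig 1 ++ D).
  assert (key : beq (n+1) (p' ++ D) (s ++ X ++ winv s)).
  { eapply beq_trans.
    - pose proof (beq_cong _ _ _ [] D Hps) as H. simpl in H. exact H.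
    - unfold sconj, X. rewrite <- ?app_assoc.
      assert (E := beq_pre (n+1) _ _ (s ++ dshift p ++ sig 1) (Hsh (winv s) (in_B_winv _ _ Hs))).
      rewrite <- ?app_assoc in E. exact E. }
  unfold centralizes. fold X. split; intro H.
  - assert (E : beq (n+1) (s ++ X ++ winv s) (s' ++ X ++ winv s')).
    { eapply beq_trans; [apply beq_sym; exact key|]. exact H. }
    eapply beq_trans.
    + apply beq_sym. pose proof (cancel_mid_l (n+1) s (winv s' ++ s ++ X) [] HsB) as Hc.
      rewrite ?app_nil_r, <- ?app_assoc in Hc. rewrite <- ?app_assoc. exact Hc.
    + eapply beq_trans.
      * pose proof (beq_cong _ _ _ (winv s') s E) as H2. rewrite <- ?app_assoc in H2. exact H2.
      * pose proof (cancel_mid_l (n+1) s' [] (X ++ winv s' ++ s) Hs') as Hc.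
        simpl in Hc. rewrite <- ?app_assoc. exact Hc.
  - eapply beq_trans; [exact key|].
    eapply beq_trans.
    + apply beq_sym. pose proof (cancel_mid_r (n+1) s' [] (s ++ X ++ winv s) Hs') as Hc.
      simpl in Hc. exact Hc.
    + pose proof (beq_cong _ _ _ s' (winv s) H) as H2. rewrite <- ?app_assoc in H2.
      eapply beq_trans; [exact H2|].
      pose proof (cancel_mid_r (n+1) s (s' ++ X ++ winv s') [] HsB) as Hc.
      rewrite ?app_nil_r, <- ?app_assoc in Hc. exact Hc.
Qed.
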